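(* Let $X$ be a non-negative random variable with finite mean $\mu>0$. For any integer $m\geqslant 2$ there exist constants $r_m,s_m>0$ such that \[ IG_{m;\min}(X)=G(X+r_m),\qquad IG_{m;\max}(X)=G(X+s_m), \] where for a non-negative random variable $Y$ with mean $\mu_Y>0$, $G(Y)=\dfrac{\mathbb{E}|Y_1-Y_2|}{2\mu_Y}$ is the classical Gini coefficient, $Y_1,Y_2$ being i.i.d. copies of $Y$.
   Context: For an integer $m\geqslant 2$ and i.i.d. copies $X_1,\ldots,X_m$ of $X$, the extended lower Gini index is $IG_{m;\min}(X)=\dfrac{\mathbb{E}[X_1-\min\{X_1,\ldots,X_m\}]}{m\mu}$ and the extended upper Gini index is $IG_{m;\max}(X)=\dfrac{\mathbb{E}[\max\{X_1,\ldots,X_m\}-X_1]}{m\mu}$. *)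

(* Defs.v *)
From HB Require Import structures.
From mathcomp Require Import all_boot all_order all_algebra.
From mathcomp Require Import all_classical all_reals all_analysis.
Set Implicit Arguments. Unset Strict Implicit. Unset Printing Implicit Defensive.
Import Order.TTheory GRing.Theory Num.Theory.
Local Open Scope classical_set_scope.
Local Open Scope ring_scope.

Definition iid_copies {R : realType} {d} {T : measurableType d}
  (P : probability T R) (X : T -> R)
  {d'} {T' : measurableType d'} (P' : probability T' R) (n : nat)
  (Y : 'I_n -> T' -> R) : Prop :=
  [/\ (forall i, measurable_fun setT (Y i)),
      (forall i (B : set R), measurable B -> P' (Y i @^-1` B) = P (X @^-1` B)) &
      (forall B : 'I_n -> set R, (forall i, measurable (B i)) ->
         P' (\bigcap_(i in [set: 'I_n]) (Y i @^-1` B i))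
         = \big[*%E/1%E]_(i < n) P' (Y i @^-1` B i))].

(* Extended lower Gini index  E[X_1 - min(X_1..X_m)] / (m mu), computed on
   i.i.d. copies Y of X; X_1 is the copy of index 0 (needs 0 < m). *)
Definition IG_min {R : realType} {d} {T : measurableType d}
  (P : probability T R) (X : T -> R)
  {d'} {T' : measurableType d'} (P' : probability T' R) (m : nat)
  (Hm : (0 < m)%N) (Y : 'I_m -> T' -> R) : R :=
  fine (\int[P']_w ((Y (Ordinal Hm) w)%:E
                     - \big[Order.min/+oo%E]_(i < m) (Y i w)%:E))%E
  / (m%:R * fine 'E_P[X]).

Definition IG_max {R : realType} {d} {T : measurableType d}
  (P : probability T R) (X : T -> R)
  {d'} {T' : measurableType d'} (P' : probability T' R) (m : nat)
  (Hm : (0 < m)%N) (Y : 'I_m -> T' -> R) : R :=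
  fine (\int[P']_w (\big[Order.max/-oo%E]_(i < m) (Y i w)%:E
                     - (Y (Ordinal Hm) w)%:E))%E
  / (m%:R * fine 'E_P[X]).

Definition Gini {R : realType} {d} {T : measurableType d}
  (P : probability T R) (Y : T -> R)
  {d'} {T' : measurableType d'} (P' : probability T' R)
  (W : 'I_2 -> T' -> R) : R :=
  fine (\int[P']_w (`| W ord0 w - W ord_max w |)%:E)%E
  / (2 * fine 'E_P[Y]).

(* Main.v *)
Require Import Defs.
From HB Require Import structures.
From mathcomp Require Import all_boot all_order all_algebra.
From mathcomp Require Import all_classical all_reals all_analysis.
From mathcomp Require Import measurable_realfun ring lra.
Import Order.TTheory GRing.Theory Num.Theory.
Local Open Scope classical_set_scope.
Local Open Scope ring_scope.

Section poly.
Context {R : realType}.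
Lemma pow_le1 (s : R) k : 0 <= s <= 1 -> 0 <= s ^+ k <= 1.
Proof. by case/andP => s0 s1; rewrite exprn_ge0 // exprn_ile1. Qed.

Lemma pow_le2 (s : R) k : 0 <= s <= 1 -> (2 <= k)%N -> s ^+ k <= s ^+ 2.
Proof.
move=> /[dup] hs /andP[s0 s1] k2; rewrite -(subnK k2) exprD.
have /andP[h0 h1] := pow_le1 s (k - 2)%N hs.
by rewrite -[leRHS]mul1r; apply: ler_pM => //; exact: exprn_ge0.
Qed.

Lemma pow_le_s (s : R) k : 0 <= s <= 1 -> (1 <= k)%N -> s ^+ k <= s.
Proof.
move=> /[dup] hs /andP[s0 s1] k1; rewrite -(subnK k1) exprD expr1.
have /andP[h0 h1] := pow_le1 s (k - 1)%N hs.
by rewrite -[leRHS]mul1r; apply: ler_pM => //; exact: exprn_ge0.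
Qed.

Lemma polyP2 (s : R) k : 0 <= s <= 1 -> s - s ^+ k.+1 <= k%:R * (s - s ^+ 2).
Proof.
move=> /[dup] hs /andP[s0 s1]; elim: k => [|k IH]; first by rewrite expr1 subrr mul0r.
have h := pow_le_s s k.+1 hs (isT : (1 <= k.+1)%N).
have e : s - s ^+ k.+2 = (s - s ^+ k.+1) + s ^+ k.+1 * (1 - s).
  by rewrite exprS; ring.
rewrite e -natr1 mulrDl mul1r; apply: lerD => //.
rewrite expr2 -[X in _ <= X - _]mulr1 -mulrBr mulrC [X in _ <= X]mulrC.
by apply: ler_pM => //; rewrite ?subr_ge0 ?exprn_ge0.
Qed.
End poly.

Section gen.
Context {R : realType}.
Local Open Scope ereal_scope.

Lemma mpre {d d'} {T : measurableType d} {T' : measurableType d'} (f : T -> T') A :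
  measurable_fun setT f -> measurable A -> measurable (f @^-1` A).
Proof. by move=> mf mA; rewrite -[_ @^-1` _]setTI; apply: mf. Qed.

Lemma ge0_E_ccdf {d} {T : measurableType d} (P : probability T R) (F : T -> R) :
  measurable_fun setT F -> (forall x, (0 <= F x)%R) ->
  'E_P[F] = \int[lebesgue_measure]_(t in `[0%R, +oo[) P (F @^-1` `]t, +oo[).
Proof.
move=> mF F0.
pose Z : {RV P >-> R} := mfun_Sub (mem_set mF).
exact: (@ge0_expectation_ccdf _ _ _ P Z F0).
Qed.

Lemma L1_E_ccdf {d} {T : measurableType d} (P : probability T R) (F : T -> R) :
  F \in Lfun P 1 ->
  'E_P[F] = \int[lebesgue_measure]_(t in `[0%R, +oo[) P (F @^-1` `]t, +oo[)
   - \int[lebesgue_measure]_(t in `]-oo, 0%R[) P (F @^-1` `]-oo, t]).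
Proof.
move=> LF.
have mF : measurable_fun setT F.
  by move: LF => /Lfun1_integrable /integrableP [/measurable_EFinP].
pose Z : {RV P >-> R} := mfun_Sub (mem_set mF).
exact: (@expectation_cdf_ccdf _ _ _ P Z LF).
Qed.

Lemma E_from_ccdf {d} {T : measurableType d} (P : probability T R) (F : T -> R)
  (h : R -> R) : F \in Lfun P 1 ->
  (forall t, P (F @^-1` `]t, +oo[) = (h t)%:E) ->
  (forall t, (t < 0)%R -> h t = 1%R) ->
  'E_P[F] = \int[lebesgue_measure]_(t in `[0%R, +oo[) (h t)%:E.
Proof.
move=> LF hF h1.
have mF : measurable_fun setT F.
  by move: LF => /Lfun1_integrable /integrableP [/measurable_EFinP].
rewrite L1_E_ccdf //.
rewrite [X in _ - X](_ : _ = 0) ?sube0; last first.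
  apply: integral0_eq => t; rewrite /= in_itv /= => t0.
  have -> : F @^-1` `]-oo, t] = ~` (F @^-1` `]t, +oo[).
    apply/seteqP; split => w /=; rewrite !in_itv /= andbT ?leNgt.
      by move=> /negP.
    by move=> /negP.
  by rewrite probability_setC ?hF ?h1 ?subee //; exact: mpre.
by apply: eq_integral => t _; rewrite hF.
Qed.

End gen.

Section copies.
Context {R : realType} {d} {T : measurableType d} (P : probability T R) (X : T -> R).
Hypotheses (mX : measurable_fun setT X) (X0 : forall t, (0 <= X t)%R)
  (iX : P.-integrable setT (EFin \o X)).
Local Open Scope ereal_scope.

Definition SX (t : R) : R := fine (P (X @^-1` `]t, +oo[)).

Lemma pre_leC (T0 : Type) (f : T0 -> R) t :
  f @^-1` `]-oo, t] = ~` (f @^-1` `]t, +oo[).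
Proof.
apply/seteqP; split => w /=; rewrite !in_itv /= andbT ?leNgt.
  by move=> /negP.
by move=> /negP.
Qed.

Lemma PS t : P (X @^-1` `]t, +oo[) = (SX t)%:E.
Proof. by rewrite /SX fineK //; apply: fin_num_measure; apply: mpre => //; exact: measurable_itv. Qed.

Lemma S01 t : (0 <= SX t <= 1)%R.
Proof.
rewrite -!lee_fin -PS measure_ge0 /=.
by apply: probability_le1; apply: mpre => //; exact: measurable_itv.
Qed.

Lemma S1 t : (t < 0)%R -> SX t = 1%R.
Proof.
move=> t0; rewrite /SX.
have -> : X @^-1` `]t, +oo[ = setT.
  apply/seteqP; split => // w _ /=; rewrite in_itv /= andbT.
  exact: (lt_le_trans t0).
by rewrite probability_setT.
Qed.

Lemma mS : measurable_fun setT SX.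
Proof.
apply: nonincreasing_measurable => // x y xy.
rewrite -lee_fin -!PS; apply: le_measure; rewrite ?inE.
- by apply: mpre => //; exact: measurable_itv.
- by apply: mpre => //; exact: measurable_itv.
move=> w /=; rewrite !in_itv /= !andbT; exact: le_lt_trans.
Qed.

Lemma LX : X \in Lfun P 1.
Proof. exact/Lfun1_integrable. Qed.

Lemma EX : 'E_P[X] = \int[lebesgue_measure]_(t in `[0%R, +oo[) (SX t)%:E.
Proof. by rewrite ge0_E_ccdf //; apply: eq_integral => t _; rewrite PS. Qed.

Context {d'} {T' : measurableType d'} (P' : probability T' R) (n : nat)
  (Y : 'I_n -> T' -> R).
Hypothesis hY : iid_copies P X P' Y.

Lemma mY i : measurable_fun setT (Y i).
Proof. by case: hY. Qed.

Lemma lawY i B : measurable B -> P' (Y i @^-1` B) = P (X @^-1` B).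
Proof. by case: hY => _ h _; exact: h. Qed.

Lemma lawYg i (g : R -> R) B : measurable_fun setT g -> measurable B ->
  P' ((g \o Y i) @^-1` B) = P ((g \o X) @^-1` B).
Proof. by move=> mg mB; rewrite comp_preimage [in RHS]comp_preimage; apply: lawY; exact: mpre. Qed.

Lemma LY i : Y i \in Lfun P' 1.
Proof.
apply/Lfun1_integrable/integrableP; split; first exact/measurable_EFinP/mY.
have e1 : \int[P']_(x in setT) `|(EFin \o Y i) x| = 'E_P'[Num.norm \o Y i].
  by rewrite unlock; apply: eq_integral => w _ /=; exact: abse_EFin.
rewrite e1 ge0_E_ccdf; last 2 first.
- by apply: measurableT_comp => //; exact: mY.
- by move=> w; exact: normr_ge0.
have e2 : \int[lebesgue_measure]_(t in `[0%R, +oo[) P' ((Num.norm \o Y i) @^-1` `]t, +oo[)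
   = \int[lebesgue_measure]_(t in `[0%R, +oo[) P ((Num.norm \o X) @^-1` `]t, +oo[).
  by apply: eq_integral => t _; apply: lawYg => //; exact: measurable_itv.
rewrite e2.
rewrite -ge0_E_ccdf; last 2 first.
- by apply: measurableT_comp.
- by move=> w; exact: normr_ge0.
move/integrableP: iX => [_]; congr (_ < _).
by rewrite unlock; apply: eq_integral => w _ /=; exact: abse_EFin.
Qed.

Lemma EY i : 'E_P'[Y i] = 'E_P[X].
Proof.
rewrite L1_E_ccdf ?LY // L1_E_ccdf ?LX //; congr (_ - _).
  by apply: eq_integral => t _; rewrite lawY //; exact: measurable_itv.
by apply: eq_integral => t _; rewrite lawY //; exact: measurable_itv.
Qed.


Definition bmin w := \big[Order.min/+oo]_(i < n) (Y i w)%:E.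
Definition rmin w : R := fine (bmin w).
Definition bmax w := \big[Order.max/-oo]_(i < n) (Y i w)%:E.
Definition rmax w : R := fine (bmax w).

Lemma bmin_att (n0 : (0 < n)%N) w : exists i, bmin w = (Y i w)%:E.
Proof.
have [i0 _ h] := eq_bigmin (Ordinal n0) predT (fun i => (Y i w)%:E) isT
  (fun i _ => leey _).
by exists i0; exact: h.
Qed.

Lemma bmax_att (n0 : (0 < n)%N) w : exists i, bmax w = (Y i w)%:E.
Proof.
have [i0 _ h] := eq_bigmax (Ordinal n0) predT (fun i => (Y i w)%:E) isT
  (fun i _ => leNye _).
by exists i0; exact: h.
Qed.

Lemma bminE (n0 : (0 < n)%N) w : bmin w = (rmin w)%:E.
Proof. by rewrite /rmin; have [i ->] := bmin_att n0 w. Qed.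

Lemma bmaxE (n0 : (0 < n)%N) w : bmax w = (rmax w)%:E.
Proof. by rewrite /rmax; have [i ->] := bmax_att n0 w. Qed.

Lemma mbmin : measurable_fun setT bmin.
Proof.
rewrite /bmin; elim: (index_enum _) => [|i s IH].
  by under eq_fun do rewrite big_nil; exact: measurable_cst.
under eq_fun do rewrite big_cons.
apply: measurable_mine => //; apply/measurable_EFinP; exact: mY.
Qed.

Lemma mbmax : measurable_fun setT bmax.
Proof.
rewrite /bmax; elim: (index_enum _) => [|i s IH].
  by under eq_fun do rewrite big_nil; exact: measurable_cst.
under eq_fun do rewrite big_cons.
apply: measurable_maxe => //; apply/measurable_EFinP; exact: mY.
Qed.

Lemma mrmin (n0 : (0 < n)%N) : measurable_fun setT rmin.
Proof.
apply/measurable_EFinP.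
have -> : EFin \o rmin = bmin by apply: funext => w /=; rewrite bminE.
exact: mbmin.
Qed.

Lemma mrmax (n0 : (0 < n)%N) : measurable_fun setT rmax.
Proof.
apply/measurable_EFinP.
have -> : EFin \o rmax = bmax by apply: funext => w /=; rewrite bmaxE.
exact: mbmax.
Qed.

Lemma rmin_pre (n0 : (0 < n)%N) t :
  rmin @^-1` `]t, +oo[ = \bigcap_(i in [set: 'I_n]) (Y i @^-1` `]t, +oo[).
Proof.
apply/seteqP; split => w /=; rewrite in_itv /= andbT.
  move=> h i _; rewrite /= in_itv /= andbT.
  have : (t%:E < bmin w) by rewrite (bminE n0) lte_fin.
  by move/bigmin_gtP => [_ H]; rewrite -lte_fin; exact: H.
move=> H; rewrite -lte_fin -(bminE n0); apply/bigmin_gtP; split; first exact: ltry.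
by move=> i _; have := H i I; rewrite /= in_itv /= andbT lte_fin.
Qed.

Lemma rmax_pre (n0 : (0 < n)%N) t :
  rmax @^-1` `]-oo, t] = \bigcap_(i in [set: 'I_n]) (Y i @^-1` `]-oo, t]).
Proof.
apply/seteqP; split => w /=; rewrite in_itv /=.
  move=> h i _; rewrite /= in_itv /=.
  have : (bmax w <= t%:E) by rewrite (bmaxE n0) lee_fin.
  by move/bigmax_leP => [_ H]; rewrite -lee_fin; exact: H.
move=> H; rewrite -lee_fin -(bmaxE n0); apply/bigmax_leP; split; first exact: leNye.
by move=> i _; have := H i I; rewrite /= in_itv /= lee_fin.
Qed.

Lemma prod_const (s : R) : \big[*%E/1%E]_(i < n) (s%:E) = (s ^+ n)%:E.
Proof.
elim: n => [|k IH]; first by rewrite big_ord0 expr0.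
by rewrite big_ord_recr /= IH exprSr EFinM.
Qed.

Lemma P_rmin (n0 : (0 < n)%N) t : P' (rmin @^-1` `]t, +oo[) = ((SX t) ^+ n)%:E.
Proof.
rewrite rmin_pre //; case: hY => _ _ hind.
rewrite (hind (fun _ => [set` `]t, +oo[])); last by move=> _; exact: measurable_itv.
rewrite -prod_const; apply: eq_bigr => i _.
by rewrite lawY ?PS //; exact: measurable_itv.
Qed.

Lemma PXle t : P (X @^-1` `]-oo, t]) = (1 - SX t)%:E.
Proof.
rewrite pre_leC probability_setC ?PS //; last by apply: mpre => //; exact: measurable_itv.
Qed.

Lemma P_rmax (n0 : (0 < n)%N) t :
  P' (rmax @^-1` `]t, +oo[) = (1 - (1 - SX t) ^+ n)%:E.
Proof.
have e : rmax @^-1` `]t, +oo[ = ~` (rmax @^-1` `]-oo, t]).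
  by rewrite pre_leC setCK.
rewrite e probability_setC; last by apply: mpre; [exact: mrmax|exact: measurable_itv].
rewrite rmax_pre //; case: hY => _ _ hind.
rewrite (hind (fun _ => [set` `]-oo, t]])); last by move=> _; exact: measurable_itv.
rewrite EFinB -prod_const; congr (_ - _); apply: eq_bigr => i _.
by rewrite lawY ?PXle //; exact: measurable_itv.
Qed.

Lemma Lsel (F : T' -> R) : measurable_fun setT F ->
  (forall w, exists i, F w = Y i w) -> F \in Lfun P' 1.
Proof.
move=> mF H; apply/Lfun1_integrable.
have ig : P'.-integrable setT (fun w => \sum_(i < n) (`|Y i w|%R)%:E).
  apply: integrable_sum => // i _.
  have := integrable_abse (proj1 (Lfun1_integrable _ _) (LY i)).
  by apply: eq_integrable => // w _ /=; rewrite abse_EFin.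
apply: (le_integrable measurableT _ _ ig); first exact/measurable_EFinP.
move=> w _ /=; have [i ->] := H w; rewrite sumEFin abse_EFin lee_fin.
rewrite (@ger0_norm _ (\sum_(j < n) `|Y j w|)%R); last by apply: sumr_ge0.
rewrite (bigD1 i) //= lerDl.
exact: sumr_ge0.
Qed.

Lemma E_rmin (n0 : (0 < n)%N) :
  'E_P'[rmin] = \int[lebesgue_measure]_(t in `[0%R, +oo[) ((SX t) ^+ n)%:E.
Proof.
apply: E_from_ccdf; first apply: Lsel.
- exact: mrmin.
- by move=> w; have [i h] := bmin_att n0 w; exists i; rewrite /rmin h.
- exact: P_rmin.
- by move=> t t0; rewrite S1 // expr1n.
Qed.

Lemma E_rmax (n0 : (0 < n)%N) :
  'E_P'[rmax] = \int[lebesgue_measure]_(t in `[0%R, +oo[) (1 - (1 - SX t) ^+ n)%:E.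
Proof.
apply: E_from_ccdf; first apply: Lsel.
- exact: mrmax.
- by move=> w; have [i h] := bmax_att n0 w; exists i; rewrite /rmax h.
- exact: P_rmax.
- by move=> t t0; rewrite S1 // subrr expr0n eqn0Ngt n0 /= subr0.
Qed.

End copies.

Lemma choose_r {R : realType} (mu a2 L : R) (m : nat) : 0 < mu -> (1 < m)%N ->
  0 <= mu - a2 -> mu - a2 <= L -> L <= (m%:R - 1) * (mu - a2) ->
  exists r, 0 < r /\ L / (m%:R * mu) = (2 * mu - 2 * a2) / (2 * (mu + r)).
Proof.
move=> mu0 m1 D0 DL LD.
have m2 : (2 <= m%:R :> R) by rewrite (ler_nat R 2 m).
have [D00|D0'] := eqVneq (mu - a2) 0.
  have L0 : L = 0 by apply/eqP; rewrite eq_le; apply/andP; split; [move: LD; rewrite D00 mulr0|move: DL; rewrite D00].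
  exists 1; split => //; rewrite L0 mul0r.
  by rewrite (_ : 2 * mu - 2 * a2 = 0) ?mul0r //; rewrite -mulrBr D00 mulr0.
have Dp : 0 < mu - a2 by rewrite lt_neqAle eq_sym D0' D0.
have Lp : 0 < L by apply: lt_le_trans DL.
exists (m%:R * mu * (mu - a2) / L - mu); split.
  rewrite subr_gt0 ltr_pdivlMr //.
  nra.
rewrite (addrC mu) subrK.
have L0 : L != 0 by rewrite gt_eqF.
have m0 : m%:R != 0 :> R by rewrite gt_eqF // (lt_le_trans _ m2).
have mu0' : mu != 0 by rewrite gt_eqF.
field.
by rewrite D0' L0 m0 mu0'.
Qed.

Section ineq.
Context {R : realType} {d} {T : measurableType d} (P : probability T R) (X : T -> R).
Hypotheses (mX : measurable_fun setT X) (X0 : forall t, (0 <= X t)%R)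
  (iX : P.-integrable setT (EFin \o X)).
Local Open Scope ereal_scope.

Lemma int_le4 (f g h k : R -> R) :
  measurable_fun setT f -> measurable_fun setT g -> measurable_fun setT h ->
  measurable_fun setT k ->
  (forall t, (0 <= f t)%R) -> (forall t, (0 <= g t)%R) ->
  (forall t, (0 <= h t)%R) -> (forall t, (0 <= k t)%R) ->
  (forall t, (f t + g t <= h t + k t)%R) ->
  \int[lebesgue_measure]_(t in `[0%R, +oo[) (f t)%:E
   + \int[lebesgue_measure]_(t in `[0%R, +oo[) (g t)%:E
  <= \int[lebesgue_measure]_(t in `[0%R, +oo[) (h t)%:E
   + \int[lebesgue_measure]_(t in `[0%R, +oo[) (k t)%:E.
Proof.
move=> mf mg mh mk f0 g0 h0 k0 H.
have mE (u : R -> R) : measurable_fun setT u ->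
    measurable_fun (`[0%R, +oo[ : set R) (fun t => (u t)%:E).
  by move=> mu; apply: measurable_funTS; exact/measurable_EFinP.
rewrite -ge0_integralD //; last 4 first.
- by move=> t _; rewrite lee_fin.
- exact: mE.
- by move=> t _; rewrite lee_fin.
- exact: mE.
rewrite -ge0_integralD //; last 4 first.
- by move=> t _; rewrite lee_fin.
- exact: mE.
- by move=> t _; rewrite lee_fin.
- exact: mE.
under eq_integral do rewrite -EFinD.
under [X in _ <= X]eq_integral do rewrite -EFinD.
apply: ge0_le_integral => //.
- by move=> t _; rewrite lee_fin addr_ge0.
- by apply: mE; exact: measurable_funD.
- by apply: mE; exact: measurable_funD.
- by move=> t _; rewrite lee_fin.
Qed.

Lemma intZ (c : R) (f : R -> R) : (0 <= c)%R -> measurable_fun setT f ->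
  (forall t, (0 <= f t)%R) ->
  \int[lebesgue_measure]_(t in `[0%R, +oo[) (c * f t)%:E
  = c%:E * \int[lebesgue_measure]_(t in `[0%R, +oo[) (f t)%:E.
Proof.
move=> c0 mf f0; under eq_integral do rewrite EFinM.
apply: ge0_integralZl_EFin => //.
- by move=> t _; rewrite lee_fin.
- by apply: measurable_funTS; exact/measurable_EFinP.
Qed.

Definition Ak k := \int[lebesgue_measure]_(t in `[0%R, +oo[) ((SX P X t) ^+ k)%:E.
Definition Bm m := \int[lebesgue_measure]_(t in `[0%R, +oo[) (1 - (1 - SX P X t) ^+ m)%:E.

Let mSk k : measurable_fun setT (fun t => SX P X t ^+ k)%R.
Proof. by apply: measurable_funX; exact: mS. Qed.
Let mSc (c : R) k : measurable_fun setT (fun t => c * SX P X t ^+ k)%R.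
Proof. by apply: measurable_funM => //; exact: mSk. Qed.
Let mB m : measurable_fun setT (fun t => 1 - (1 - SX P X t) ^+ m)%R.
Proof.
apply: measurable_funB => //; apply: measurable_funX.
by apply: measurable_funB => //; exact: mS.
Qed.
Let S01' t : (0 <= SX P X t <= 1)%R := S01 P X mX t.
Let Sk0 k t : (0 <= SX P X t ^+ k)%R.
Proof. by have /andP[] := pow_le1 _ k (S01' t). Qed.
Let q01 t : (0 <= 1 - SX P X t <= 1)%R.
Proof. by have /andP[a b] := S01' t; rewrite subr_ge0 b /= lerBlDr lerDl. Qed.
Let B0 m t : (0 <= 1 - (1 - SX P X t) ^+ m)%R.
Proof. by have /andP[_ b] := pow_le1 _ m (q01 t); rewrite subr_ge0. Qed.

Lemma A1E : 'E_P[X] = Ak 1.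
Proof. by rewrite (EX P X mX X0); apply: eq_integral => t _; rewrite expr1. Qed.

Lemma Ak_ge0 k : 0 <= Ak k.
Proof. by apply: integral_ge0 => t _; rewrite lee_fin. Qed.

Lemma Bm_ge0 m : 0 <= Bm m.
Proof. by apply: integral_ge0 => t _; rewrite lee_fin. Qed.

Lemma int0 : \int[@lebesgue_measure R]_(t in `[0%R, +oo[) (((fun=> 0%R) : R -> R) t)%:E = 0.
Proof. by apply: integral0_eq. Qed.

Lemma Ak_le k j : (forall s : R, (0 <= s <= 1)%R -> (s ^+ k <= s ^+ j)%R) -> Ak k <= Ak j.
Proof.
move=> H; have := @int_le4 (fun t => SX P X t ^+ k)%R (fun=> 0%R) (fun t => SX P X t ^+ j)%R
   (fun=> 0%R) (mSk k) (measurable_cst _) (mSk j) (measurable_cst _) (Sk0 k) (fun=> lexx _)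
   (Sk0 j) (fun=> lexx _).
rewrite int0 !adde0; apply => t; rewrite !addr0; exact: H.
Qed.

Lemma I2 m : (1 <= m)%N ->
  Ak 1 + (m%:R - 1)%:E * Ak 2 <= Ak m + (m%:R - 1)%:E * Ak 1.
Proof.
move=> m1; have c0 : (0 <= m%:R - 1 :> R)%R by rewrite subr_ge0 (ler_nat R 1 m).
rewrite /Ak -!intZ //.
apply: int_le4 => //; try exact: mSk; try exact: mSc; try exact: Sk0.
- by move=> t; rewrite mulr_ge0.
- by move=> t; rewrite mulr_ge0.
move=> t; have := polyP2 _ m.-1 (S01' t); rewrite prednK // -subn1 natrB // mulrBr.
rewrite expr1; lra.
Qed.

Lemma I3 m : (2 <= m)%N -> Ak 1 + Ak 1 <= Bm m + Ak 2.
Proof.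
move=> m2; rewrite /Ak /Bm.
apply: int_le4 => //; try exact: mSk; try exact: Sk0; try exact: mB; try exact: B0.
move=> t; have := pow_le2 _ m (q01 t) m2.
have -> : ((1 - SX P X t) ^+ 2 = 1 - 2 * SX P X t + SX P X t ^+ 2)%R by ring.
rewrite expr1; lra.
Qed.

Lemma I4 m : (1 <= m)%N ->
  Bm m + (m%:R - 1)%:E * Ak 2 <= m%:R%:E * Ak 1.
Proof.
move=> m1; have c0 : (0 <= m%:R - 1 :> R)%R by rewrite subr_ge0 (ler_nat R 1 m).
rewrite -[X in _ <= X]adde0 -int0 /Ak /Bm -!intZ //.
apply: int_le4 => //; try exact: mSc; try exact: mB; try exact: B0.
- by move=> t; rewrite mulr_ge0.
- by move=> t; rewrite mulr_ge0.
move=> t; have := polyP2 _ m.-1 (q01 t); rewrite prednK // -subn1 natrB //.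
have -> : ((1 - SX P X t) - (1 - SX P X t) ^+ 2 = SX P X t - SX P X t ^+ 2)%R by ring.
rewrite mulrBr expr1 addr0.
have -> : ((m%:R - 1) * SX P X t = m%:R * SX P X t - SX P X t :> R)%R by ring.
lra.
Qed.

End ineq.

Lemma shift_copies {R : realType} {d} {T : measurableType d} (P : probability T R)
  (X : T -> R) (r : R) {d'} {T' : measurableType d'} (P' : probability T' R) n
  (W : 'I_n -> T' -> R) :
  iid_copies P (fun t => X t + r) P' W -> iid_copies P X P' (fun i w => W i w - r).
Proof.
case => mW lW pW.
have mB B : measurable B -> measurable ((fun x : R => x - r) @^-1` B).
  by move=> mB; apply: mpre => //; exact: measurable_funB.
have eX B : (fun t => X t + r) @^-1` ((fun x : R => x - r) @^-1` B) = X @^-1` B.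
  by apply/seteqP; split => t /=; rewrite addrK.
split.
- by move=> i; apply: measurable_funB => //; exact: mW.
- move=> i B mB0; have := lW i _ (mB B mB0); rewrite eX; exact.
- move=> B mB0; have := pW (fun i => (fun x : R => x - r) @^-1` B i) (fun i => mB _ (mB0 i)).
  exact.
Qed.

Lemma abs_min {R : realType} (a b c : R) : (c = a \/ c = b) -> c <= a -> c <= b ->
  `|a - b| = a + b - 2 * c.
Proof.
move=> h ca cb; have [ab|ba] := leP a b.
  rewrite ler0_norm ?subr_le0 //; move: ca cb; case: h => -> ; lra.
rewrite gtr0_norm ?subr_gt0 //; move: ca cb; case: h => ->; lra.
Qed.

Section finals.
Context {R : realType} {d} {T : measurableType d} (P : probability T R) (X : T -> R).
Hypotheses (mX : measurable_fun setT X) (X0 : forall t, (0 <= X t)%R)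
  (iX : P.-integrable setT (EFin \o X)).
Local Open Scope ereal_scope.

Lemma Lrmin {d'} {T' : measurableType d'} (P' : probability T' R) n (Y : 'I_n -> T' -> R)
  (hY : iid_copies P X P' Y) (n0 : (0 < n)%N) : rmin n Y \in Lfun P' 1.
Proof.
apply: (Lsel P X mX iX P' n Y hY); first exact: (mrmin P X P' n Y hY n0).
by move=> w; have [i h] := bmin_att n Y n0 w; exists i; rewrite /rmin h.
Qed.

Lemma Lrmax {d'} {T' : measurableType d'} (P' : probability T' R) n (Y : 'I_n -> T' -> R)
  (hY : iid_copies P X P' Y) (n0 : (0 < n)%N) : rmax n Y \in Lfun P' 1.
Proof.
apply: (Lsel P X mX iX P' n Y hY); first exact: (mrmax P X P' n Y hY n0).
by move=> w; have [i h] := bmax_att n Y n0 w; exists i; rewrite /rmax h.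
Qed.

Lemma int_min {d'} {T' : measurableType d'} (P' : probability T' R) n (Y : 'I_n -> T' -> R)
  (hY : iid_copies P X P' Y) (n0 : (0 < n)%N) (o : 'I_n) :
  \int[P']_w ((Y o w)%:E - \big[Order.min/+oo]_(i < n) (Y i w)%:E) = 'E_P[X] - Ak P X n.
Proof.
transitivity ('E_P'[Y o \- rmin n Y]).
  rewrite expectation.unlock; apply: eq_integral => w _.
  have := bminE n Y n0 w; rewrite /bmin => ->.
  by rewrite /= EFinB.
rewrite expectationB; last 2 first.
- exact: (LY P X mX iX P' n Y hY o).
- exact: Lrmin.
by rewrite (EY P X mX iX P' n Y hY o) (E_rmin P X mX X0 iX P' n Y hY n0).
Qed.

Lemma int_max {d'} {T' : measurableType d'} (P' : probability T' R) n (Y : 'I_n -> T' -> R)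
  (hY : iid_copies P X P' Y) (n0 : (0 < n)%N) (o : 'I_n) :
  \int[P']_w (\big[Order.max/-oo]_(i < n) (Y i w)%:E - (Y o w)%:E) = Bm P X n - 'E_P[X].
Proof.
transitivity ('E_P'[rmax n Y \- Y o]).
  rewrite expectation.unlock; apply: eq_integral => w _.
  have := bmaxE n Y n0 w; rewrite /bmax => ->.
  by rewrite /= EFinB.
rewrite expectationB; last 2 first.
- exact: Lrmax.
- exact: (LY P X mX iX P' n Y hY o).
by rewrite (EY P X mX iX P' n Y hY o) (E_rmax P X mX X0 iX P' n Y hY n0).
Qed.

Lemma E_shift (r : R) : 'E_P[fun t => (X t + r)%R] = 'E_P[X] + r%:E.
Proof.
rewrite (_ : (fun t => X t + r)%R = (X \+ cst r)%R) //.
by rewrite expectationD ?(LX P X iX) ?Lfun_cst // expectation_cst.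
Qed.

Lemma int_gini (r : R) {d'} {T' : measurableType d'} (P' : probability T' R)
  (W : 'I_2 -> T' -> R) : iid_copies P (fun t => X t + r)%R P' W ->
  \int[P']_w (`|W ord0 w - W ord_max w|%R)%:E = 'E_P[X] + 'E_P[X] - 2%:E * Ak P X 2.
Proof.
move=> hW; have hV := shift_copies P X r P' 2 W hW.
set V := (fun i w => W i w - r)%R in hV.
transitivity ('E_P'[(V ord0 \+ V ord_max) \- (2 \o* rmin 2 V)]%R).
  rewrite expectation.unlock; apply: eq_integral => w _ /=; congr EFin.
  have -> : (W ord0 w - W ord_max w = V ord0 w - V ord_max w)%R by rewrite /V; ring.
  rewrite mulrC; apply: abs_min.
  - have [i hi] := bmin_att 2 V isT w.
    have e : rmin 2 V w = V i w by rewrite /rmin hi.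
    case: i e {hi} => [[|[|k]]] // ? e; [left|right]; rewrite e; congr V; exact: val_inj.
  - rewrite -lee_fin -(bminE 2 V isT w) /bmin; exact: bigmin_le.
  - rewrite -lee_fin -(bminE 2 V isT w) /bmin; exact: bigmin_le.
have L0 := LY P X mX iX P' 2 V hV ord0.
have L1 := LY P X mX iX P' 2 V hV ord_max.
rewrite expectationB; last 2 first.
- exact: rpredD.
- by apply: Lfun_scale => //; exact: Lrmin.
rewrite expectationD // expectationZl; last exact: Lrmin.
by rewrite !(EY P X mX iX P' 2 V hV) (E_rmin P X mX X0 iX P' 2 V hV isT).
Qed.

End finals.

Theorem proposition2p8 (R : realType) (d : measure_display) (T : measurableType d)
  (P : probability T R) (X : T -> R) :
  measurable_fun setT X ->
  (forall t, 0 <= X t) ->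
  P.-integrable setT (EFin \o X) ->
  (0 < 'E_P[X])%E ->
  forall (m : nat) (Hm : (1 < m)%N),
  exists r s : R, 0 < r /\ 0 < s /\
    (forall (d1 : measure_display) (T1 : measurableType d1) (P1 : probability T1 R)
            (Y : 'I_m -> T1 -> R),
       iid_copies P X P1 Y ->
       forall (d2 : measure_display) (T2 : measurableType d2) (P2 : probability T2 R)
              (W : 'I_2 -> T2 -> R),
       iid_copies P (fun t => X t + r) P2 W ->
       IG_min P X P1 (ltnW Hm) Y = Gini P (fun t => X t + r) P2 W) /\
    (forall (d1 : measure_display) (T1 : measurableType d1) (P1 : probability T1 R)
            (Y : 'I_m -> T1 -> R),
       iid_copies P X P1 Y ->
       forall (d2 : measure_display) (T2 : measurableType d2) (P2 : probability T2 R)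
              (W : 'I_2 -> T2 -> R),
       iid_copies P (fun t => X t + s) P2 W ->
       IG_max P X P1 (ltnW Hm) Y = Gini P (fun t => X t + s) P2 W).
Proof.
move=> mX X0 iX EX0 m Hm.
have m1 : (1 <= m)%N by apply: ltnW.
have fA1 : Ak P X 1 \is a fin_num by rewrite -A1E //; exact: expectation_fin_num (LX P X iX).
have fAk k : Ak P X k.+1 \is a fin_num.
  move: fA1; rewrite !ge0_fin_numE ?Ak_ge0 // => h.
  apply: le_lt_trans h; apply: Ak_le => // s hs; apply: pow_le_s => //.
have fA2 : Ak P X 2 \is a fin_num by exact: fAk.
have fAm : Ak P X m \is a fin_num by rewrite -(prednK m1); exact: fAk.
have I4' := I4 P X mX m m1.
have fBm : Bm P X m \is a fin_num.
  rewrite ge0_fin_numE ?Bm_ge0 //.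
  apply: (@le_lt_trans _ _ (m%:R%:E * Ak P X 1)%E).
    apply: le_trans I4'; apply: leeDl; apply: mule_ge0 => //; last exact: Ak_ge0.
    by rewrite lee_fin subr_ge0 (ler_nat R 1 m).
  by rewrite -(fineK fA1) -EFinM ltry.
set a1 := fine (Ak P X 1); set a2 := fine (Ak P X 2); set am := fine (Ak P X m).
set bm := fine (Bm P X m).
have eA1 : Ak P X 1 = a1%:E by rewrite fineK.
have eA2 : Ak P X 2 = a2%:E by rewrite fineK.
have eAm : Ak P X m = am%:E by rewrite fineK.
have eBm : Bm P X m = bm%:E by rewrite fineK.
have eEX : ('E_P[X] = a1%:E)%E by rewrite A1E.
have mu0 : 0 < a1 by rewrite -lte_fin -eEX.
have h2 : a1 + (m%:R - 1) * a2 <= am + (m%:R - 1) * a1.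
  by have := I2 P X mX m m1; rewrite eA1 eA2 eAm -!EFinM -!EFinD lee_fin.
have h3 : a1 + a1 <= bm + a2.
  by have := I3 P X mX m Hm; rewrite eA1 eA2 eBm -!EFinD lee_fin.
have h4 : bm + (m%:R - 1) * a2 <= m%:R * a1.
  by have := I4'; rewrite eA1 eA2 eBm -!EFinM -!EFinD lee_fin.
have h5 : am <= a2.
  have := Ak_le P X mX m 2 (fun s hs => pow_le2 s m hs Hm).
  by rewrite eA2 eAm lee_fin.
have h6 : a2 <= a1.
  have := Ak_le P X mX 2 1 (fun s hs => pow_le_s s 2 hs isT).
  by rewrite eA2 eA1 lee_fin.
have c0 : (0 : R) <= m%:R - 1 by rewrite subr_ge0 (ler_nat R 1 m).
have D0 : 0 <= a1 - a2 by rewrite subr_ge0.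
have hL1 : a1 - a2 <= a1 - am by lra.
have hL2 : a1 - am <= (m%:R - 1) * (a1 - a2) by rewrite mulrBr; lra.
have hU1 : a1 - a2 <= bm - a1 by lra.
have em : m%:R * a1 = (m%:R - 1) * a1 + a1 by ring.
have hU2 : bm - a1 <= (m%:R - 1) * (a1 - a2) by rewrite mulrBr; lra.
have [r [r0 hr]] := @choose_r R a1 a2 (a1 - am) m mu0 Hm D0 hL1 hL2.
have [s [s0 hs]] := @choose_r R a1 a2 (bm - a1) m mu0 Hm D0 hU1 hU2.
exists r, s; split; first exact: r0.
split; first exact: s0.
split.
- move=> d1 T1 P1 Y hY d2 T2 P2 W hW.
  rewrite /IG_min /Gini (int_min P X mX X0 iX P1 m Y hY m1).
  rewrite (int_gini P X mX X0 iX r P2 W hW) (E_shift P X iX r).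
  rewrite eEX eAm eA2 -!EFinM -!EFinD ?EFinB /= hr; congr (_ / _); ring.
- move=> d1 T1 P1 Y hY d2 T2 P2 W hW.
  rewrite /IG_max /Gini (int_max P X mX X0 iX P1 m Y hY m1).
  rewrite (int_gini P X mX X0 iX s P2 W hW) (E_shift P X iX s).
  rewrite eEX eBm eA2 -!EFinM -!EFinD ?EFinB /= hs; congr (_ / _); ring.
Qed.
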